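(* The nested cross decomposition (NCD) algorithm described in the context finds an optimal solution of the linear primary master problem $[\mathrm{PMP\text{-}LR}]$ within a finite number of iterations.
   Context: Setting. There is a finite scenario tree with node set $\mathcal N$; node $n$ has probability $\pi_n$, and $\mathcal P_n$ denotes the set of nodes on the path from the root to $n$ (inclusive). At each node $n$ there is an expansion decision $x_n$ (binary in the original problem) in a polyhedral set $X_n$ of upper-level constraints, with investment cost $\mathrm{TIC}^n(x_n)$ (linear), and a cumulative-capacity vector $z_n\in\{0,1\}^d$. For each node $n$ there is a finite set $K_n$ of representative days and, for each $k\in K_n$, a finite set $\mathbb P^{n_k}$ of sampled lower-level scenarios $\zeta=\zeta^p_{n_k}$ with probabilities. Given $z_n$, the operational subproblem $[\mathrm{SP}(\zeta)]$ is $\min_y \mathrm{TOC}(y)$ s.t. $By\le V(\zeta)(b+A_nz_n)$, $y\in Y_n^k(\zeta)$, where $Y_n^k(\zeta)$ is a mixed-integer set with binary integer variables, independent of $z_n$; the model has relatively complete recourse (every subproblem is feasible for every admissible upper-level decision). The recourse function is $\mathbb Q(z_n)=\pi_n\sum_{k\in K_n}\mathbf E_\zeta[\text{optimal value of }\mathrm{SP}(\zeta)]$. Let $\mathcal F_n$ index the finitely many possible capacity outcomes $z_n^i\in\{0,1\}^d$ at node $n$, and let $(\overline{\mathrm{TOC}}_n^k)^i$ be the expected optimal operating cost in day $k$ under capacity $z_n^i$. The problem $[\mathrm{PMP\text{-}LR}]$ is $\min_{x,\lambda}\ \sum_{n\in\mathcal N}\pi_n\big[\mathrm{TIC}^n(x_n)+\sum_{i\in\mathcal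 F_n}\sum_{k\in K_n}(\overline{\mathrm{TOC}}_n^k)^i\lambda_n^i\big]$ s.t. $\sum_{i\in\mathcal F_n}z_n^i\lambda_n^i\le\sum_{m\in\mathcal P_n}x_m$ (duals $\psi_n$), $\sum_{m\in\mathcal P_n}x_m\le\mathbf 1$, $\sum_{i\in\mathcal F_n}\lambda_n^i=1$ (dual $\psi_n^0$) for all $n$, with $x_n$ in the continuous relaxation of $X_n\cap\{0,1\}^d$ and $\lambda_n^i\in[0,1]$. NCD algorithm: (1) Initialize a restricted version $[\mathrm{RPMP\text{-}LR}]$ of $[\mathrm{PMP\text{-}LR}]$ with a subset of the columns $\lambda_n^i$, and for each $n$ a relaxed secondary master problem $[\mathrm{rSMP}_n]$. (2) Outer loop: solve $[\mathrm{RPMP\text{-}LR}]$ and obtain duals $(\hat\psi_n,\hat\psi_n^0)$. For each $n$, run the inner loop on $[\mathrm{SMP}_n]:\ \min -\hat\psi_n^\intercal z_n-\hat\psi_n^0+\theta$ s.t. $z_n\in\{0,1\}^d$ and cutting planes in $(z_n,\theta)$: solve $[\mathrm{rSMP}_n]$ obtaining $(\hat\theta,\hat z_n)$; solve the LP relaxations of all $\mathrm{SP}(\zeta^p_{n_k})$ at $\hat z_n$ and, if $\hat\theta$ is below their expected (probability-weighted) value $\mathbb Q_{LP}(\hat z_n)$, add Benders cuts and repeat; else solve all mixed-integer subproblems and, if $\hat\theta\ge\mathbb Q(\hat z_n)$, stop the inner loop, otherwise add integer L-shaped (Laporte–Louveaux) cuts and repeat. Cuts generated are kept across outer iterations. (3)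 Add the resulting columns (capacity outcomes $\hat z_n$ with their costs) to $[\mathrm{RPMP\text{-}LR}]$. (4) Repeat until no column with negative reduced cost exists, i.e. the optimal value of $[\mathrm{SMP}_n]$ is $\ge 0$ for all $n$. *)

(* Defs.v *)
From mathcomp Require Import all_boot all_order all_algebra.
Set Implicit Arguments. Unset Strict Implicit. Unset Printing Implicit Defensive.
Import Order.TTheory GRing.Theory Num.Theory.
Local Open Scope ring_scope.

Notation bvec d := {ffun 'I_d -> bool}.

(* a cutting plane  theta >= c.1 + sum_j c.2 j * z_j *)
Definition cut (R : Type) (d : nat) := (R * ('I_d -> R))%type.

(* output of an LP solver on [RPMP-LR]: primal (x, lambda) and dual values.
   spsi = duals psi_n of the linking constraints, spsi0 = duals psi_n^0 of the
   convexity constraints; ssig, seta, subx = duals of the remaining rows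
   (sum_{m in P_n} x_m <= 1,  G_n x_n <= h_n (i.e. x_n in X_n),  x_n <= 1). *)
Record pd_sol (R : Type) (Node : finType) (d r : nat) := PDSol {
  sx : Node -> 'I_d -> R;
  slam : Node -> bvec d -> R;
  spsi : Node -> 'I_d -> R;
  spsi0 : Node -> R;
  ssig : Node -> 'I_d -> R;
  seta : Node -> 'I_r -> R;
  subx : Node -> 'I_d -> R }.

Section NCD.
Variable R : realFieldType.
Variables (Node Day Scen : finType) (d r : nat).

Definition bR (b : bool) : R := (b : nat)%:R.

Variable parent : Node -> Node.
(* P_n : nodes on the path from the root to n (inclusive) *)
Definition path_set (n : Node) : {set Node} := [set m | fconnect parent n m].

Variable pi : Node -> R.
Variable K : Node -> {set Day}.
Variable Psamp : Node -> Day -> {set Scen}.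
Variable prob : Node -> Day -> Scen -> R.
Variable spMIP : Node -> Day -> Scen -> bvec d -> R. (* opt. value of SP(zeta) at z *)
Variable spLP : Node -> Day -> Scen -> bvec d -> R.  (* opt. value of its LP relaxation *)

Definition TOCbar (n : Node) (k : Day) (z : bvec d) : R :=
  \sum_(p in Psamp n k) prob n k p * spMIP n k p z.
Definition Qrec (n : Node) (z : bvec d) : R := pi n * \sum_(k in K n) TOCbar n k z.
Definition QLPrec (n : Node) (z : bvec d) : R :=
  pi n * \sum_(k in K n) \sum_(p in Psamp n k) prob n k p * spLP n k p z.

Variable cI : Node -> 'I_d -> R.
Variable G : Node -> 'I_r -> 'I_d -> R.           (* X_n = { x | G_n x <= h_n } *)
Variable h : Node -> 'I_r -> R.

Definition TIC (n : Node) (x : 'I_d -> R) : R := \sum_j cI n j * x j.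

(* feasibility in [RPMP-LR] restricted to the columns S n (S n = all binary
   vectors gives [PMP-LR]) *)
Definition pmp_feasible (S : Node -> {set bvec d})
    (x : Node -> 'I_d -> R) (lam : Node -> bvec d -> R) : Prop :=
  (forall n j, \sum_(z : bvec d) bR (z j) * lam n z <= \sum_(m in path_set n) x m j) /\
  (forall n j, \sum_(m in path_set n) x m j <= 1) /\
  (forall n, \sum_(z : bvec d) lam n z = 1) /\
  (forall n i, \sum_j G n i j * x n j <= h n i) /\
  (forall n j, 0 <= x n j <= 1) /\
  (forall n z, 0 <= lam n z <= 1) /\
  (forall n z, z \notin S n -> lam n z = 0).

Definition pmp_obj (x : Node -> 'I_d -> R) (lam : Node -> bvec d -> R) : R :=
  \sum_n pi n * (TIC n (x n) + \sum_(z : bvec d) \sum_(k in K n) TOCbar n k z * lam n z).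

Definition pmp_optimal (x : Node -> 'I_d -> R) (lam : Node -> bvec d -> R) : Prop :=
  pmp_feasible (fun _ => setT) x lam /\
  forall x' lam', pmp_feasible (fun _ => setT) x' lam' -> pmp_obj x lam <= pmp_obj x' lam'.

(* LP dual of [RPMP-LR] with columns S (sign convention: min problem,
   duals of <=-rows are <= 0, duals of equality rows are free; the bounds
   lambda <= 1, implied by sum lambda = 1 and lambda >= 0, carry no dual). *)
Definition dual_feasible (S : Node -> {set bvec d}) (s : pd_sol R Node d r) : Prop :=
  (forall n j, spsi s n j <= 0) /\ (forall n j, ssig s n j <= 0) /\
  (forall n i, seta s n i <= 0) /\ (forall n j, subx s n j <= 0) /\
  (forall m j, \sum_(n | m \in path_set n) (ssig s n j - spsi s n j)
                   + \sum_i seta s m i * G m i j + subx s m j <= pi m * cI m j) /\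
  (forall n z, z \in S n ->
         \sum_j spsi s n j * bR (z j) + spsi0 s n <= Qrec n z).

Definition dual_obj (s : pd_sol R Node d r) : R :=
  \sum_n (\sum_j ssig s n j + spsi0 s n + \sum_i seta s n i * h n i + \sum_j subx s n j).

Definition pd_optimal (S : Node -> {set bvec d}) (s : pd_sol R Node d r) : Prop :=
  [/\ pmp_feasible S (sx s) (slam s), dual_feasible S s
    & pmp_obj (sx s) (slam s) = dual_obj s].

Definition cutval (c : cut R d) (z : bvec d) : R := c.1 + \sum_j c.2 j * bR (z j).

Variable Lb : Node -> R.

Definition rsmp_feasible (n : Node) (cs : seq (cut R d)) (t : R) (z : bvec d) : bool :=
  (Lb n <= t) && all (fun c => cutval c z <= t) cs.

Definition smp_obj (psi : 'I_d -> R) (psi0 : R) (t : R) (z : bvec d) : R :=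
  - (\sum_j psi j * bR (z j)) - psi0 + t.

Definition rsmp_optimal (n : Node) (psi : 'I_d -> R) (psi0 : R) (cs : seq (cut R d))
    (tz : R * bvec d) : Prop :=
  rsmp_feasible n cs tz.1 tz.2 /\
  forall t z, rsmp_feasible n cs t z -> smp_obj psi psi0 tz.1 tz.2 <= smp_obj psi psi0 t z.

(* integer L-shaped (Laporte--Louveaux) cut at zh:
   theta >= (Q(zh) - L)(sum_{zh_j=1} z_j - sum_{zh_j=0} z_j - |S(zh)| + 1) + L *)
Definition lshaped_cut (n : Node) (zh : bvec d) : cut R d :=
  (Lb n + (Qrec n zh - Lb n) * (1 - (#|[set j | zh j]|)%:R),
   fun j => (Qrec n zh - Lb n) * (if zh j then 1 else -1)).

Variable rpmp : (Node -> {set bvec d}) -> pd_sol R Node d r.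
Variable rsmp : Node -> ('I_d -> R) -> R -> seq (cut R d) -> R * bvec d.
Variable benders : Node -> bvec d -> cut R d.

Fixpoint inner (fuel : nat) (n : Node) (psi : 'I_d -> R) (psi0 : R)
    (cs : seq (cut R d)) : option (R * bvec d * seq (cut R d)) :=
  match fuel with
  | 0 => None
  | f.+1 =>
    let tz := rsmp n psi psi0 cs in
    if tz.1 < QLPrec n tz.2 then inner f n psi psi0 (benders n tz.2 :: cs)
    else if Qrec n tz.2 <= tz.1 then Some (tz.1, tz.2, cs)
    else inner f n psi psi0 (lshaped_cut n tz.2 :: cs)
  end.

Definition some_res (o : option (R * bvec d * seq (cut R d))) : bool :=
  if o is Some _ then true else false.
Definition res_theta (o : option (R * bvec d * seq (cut R d))) : R :=
  if o is Some (t, _, _) then t else 0.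
Definition res_z (o : option (R * bvec d * seq (cut R d))) : bvec d :=
  if o is Some (_, z, _) then z else [ffun => false].
Definition res_cuts (o : option (R * bvec d * seq (cut R d))) : seq (cut R d) :=
  if o is Some (_, _, cs) then cs else [::].

(* outer loop: at most [fuel] outer iterations, each inner loop at most [ifuel]
   iterations; returns the final solution of [RPMP-LR] (None = not finished) *)
Fixpoint outer (fuel ifuel : nat) (S : Node -> {set bvec d}) (C : Node -> seq (cut R d))
  : option ((Node -> 'I_d -> R) * (Node -> bvec d -> R)) :=
  match fuel with
  | 0 => None
  | f.+1 =>
    let s := rpmp S in
    let res := fun n => inner ifuel n (spsi s n) (spsi0 s n) (C n) in
    if [forall n, some_res (res n)] then
      if [forall n, 0 <= smp_obj (spsi s n) (spsi0 s n) (res_theta (res n)) (res_z (res n))]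
      then Some (sx s, slam s)
      else outer f ifuel (fun n => res_z (res n) |: S n) (fun n => res_cuts (res n))
    else None
  end.

End NCD.

(* Main.v *)
Require Import Defs.
From mathcomp Require Import all_boot all_order all_algebra.
From mathcomp Require Import zify ring lra.
Set Implicit Arguments. Unset Strict Implicit. Unset Printing Implicit Defensive.
Import Order.TTheory GRing.Theory Num.Theory.
Local Open Scope ring_scope.

Section Proof.
Variable R : realFieldType.
Variables (Node Day Scen : finType) (d r : nat).
Variable parent : Node -> Node.
Variable pi : Node -> R.
Variable K : Node -> {set Day}.
Variable Psamp : Node -> Day -> {set Scen}.
Variable prob : Node -> Day -> Scen -> R.
Variables spMIP spLP : Node -> Day -> Scen -> bvec d -> R.
Variable cI : Node -> 'I_d -> R.
Variable G : Node -> 'I_r -> 'I_d -> R.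
Variable h : Node -> 'I_r -> R.
Variable Lb : Node -> R.
Variable rpmp : (Node -> {set bvec d}) -> pd_sol R Node d r.
Variable rsmp : Node -> ('I_d -> R) -> R -> seq (cut R d) -> R * bvec d.
Variable benders : Node -> bvec d -> cut R d.
Hypothesis Hpi : forall n, 0 <= pi n.
Hypothesis Hprob : forall n k p, 0 <= prob n k p.
Hypothesis HLP : forall n k p z, spLP n k p z <= spMIP n k p z.
Hypothesis HLb : forall n z, Lb n <= Qrec pi K Psamp prob spMIP n z.
Hypothesis Hrsmp : forall n psi psi0 cs, rsmp_optimal Lb n psi psi0 cs (rsmp n psi psi0 cs).
Hypothesis Hbenders_valid : forall n zh z,
     cutval (benders n zh) z <= QLPrec pi K Psamp prob spLP n z.
Hypothesis Hbenders_tight : forall n zh,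
     cutval (benders n zh) zh = QLPrec pi K Psamp prob spLP n zh.

Local Notation Q := (Qrec pi K Psamp prob spMIP).
Local Notation QLP := (QLPrec pi K Psamp prob spLP).
Local Notation LS := (lshaped_cut pi K Psamp prob spMIP Lb).

Lemma QLP_le_Q n z : QLP n z <= Q n z.
Proof.
rewrite /QLPrec /Qrec; apply: ler_wpM2l => //; apply: ler_sum => k _.
rewrite /TOCbar; apply: ler_sum => p _; exact: ler_wpM2l.
Qed.

Lemma sum_bR (z : bvec d) : \sum_j bR R (z j) = (#|[set j | z j]|)%:R.
Proof.
rewrite /bR -natr_sum; congr (_%:R).
rewrite -sum1_card [in RHS]big_mkcond /=; apply: eq_bigr => j _.
by rewrite inE; case: (z j).
Qed.

Lemma LS_tight n zh : cutval (LS n zh) zh = Q n zh.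
Proof.
rewrite /cutval /lshaped_cut /=.
have -> : \sum_j (Q n zh - Lb n) * (if zh j then 1 else -1) * bR R (zh j)
   = (Q n zh - Lb n) * \sum_j bR R (zh j).
  rewrite mulr_sumr; apply: eq_bigr => j _; rewrite /bR; case: (zh j) => /=; ring.
rewrite sum_bR; ring.
Qed.

Lemma LS_valid n zh z : cutval (LS n zh) z <= Q n z.
Proof.
have [->|neq] := eqVneq z zh; first by rewrite LS_tight.
have [j0 Hj0] : exists j0, z j0 != zh j0.
  apply/existsP; apply: contraNT neq => /existsPn H; apply/eqP/ffunP => j.
  by move: (H j); rewrite negbK => /eqP.
apply: le_trans (HLb n z).
rewrite /cutval /lshaped_cut /=.
set D := Q n zh - Lb n.
have HD : 0 <= D by rewrite /D subr_ge0.
have -> : \sum_j D * (if zh j then 1 else -1) * bR R (z j)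
   = D * \sum_j ((if zh j then 1 else -1) * bR R (z j)).
  rewrite mulr_sumr; apply: eq_bigr => j _; ring.
suff : 1 - (#|[set j | zh j]|)%:R + \sum_j ((if zh j then 1 else -1) * bR R (z j)) <= 0 :> R.
  move=> H; have := mulr_ge0_le0 HD H; lra.
rewrite -sum_bR.
rewrite (bigD1 j0 (F := fun j => bR R (zh j))) //=.
rewrite (bigD1 j0 (F := fun j => (if zh j then 1 else -1) * bR R (z j))) //=.
have H1 : \sum_(j | j != j0) ((if zh j then 1 else -1) * bR R (z j)) <= \sum_(j | j != j0) bR R (zh j).
  apply: ler_sum => j _; rewrite /bR; case: (zh j); case: (z j) => /=; lra.
have H2 : (if zh j0 then 1 else -1) * bR R (z j0) <= bR R (zh j0) - 1.
  move: Hj0; rewrite /bR; case: (zh j0); case: (z j0) => //= _; lra.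
set a := (if zh j0 then _ else _) * _ in H2 *. set b := bR R (zh j0) in H2 *. set s1 := \sum_(i < d | i != j0) _ in H1 *. set s2 := \sum_(i < d | i != j0) _ in H1 *. lra.
Qed.

Definition valid n (cs : seq (cut R d)) := forall z, all (fun c => cutval c z <= Q n z) cs.
Definition pot n (cs : seq (cut R d)) :=
  addn #|[set z | all (fun c => cutval c z < QLP n z) cs]|
   #|[set z | all (fun c => cutval c z < Q n z) cs]|.

Lemma pot_bound n cs : (pot n cs <= 2 * #|{: bvec d}|)%N.
Proof. by rewrite /pot mul2n -addnn; apply: leq_add; apply: max_card. Qed.

Lemma card_drop (P P' : pred (bvec d)) z :
  P z -> ~~ P' z -> (forall y, P' y -> P y) -> (#|[set y | P' y]| < #|[set y | P y]|)%N.
Proof.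
move=> Pz nP'z sub.
rewrite (cardsD1 z [set y | P y]) inE Pz add1n ltnS.
apply: subset_leq_card; apply/subsetP => y; rewrite !inE => P'y.
rewrite sub // andbT; apply: contraNneq nP'z => <-; done.
Qed.

Lemma card_mono (P P' : pred (bvec d)) :
  (forall y, P' y -> P y) -> leq #|[set y | P' y]| #|[set y | P y]|.
Proof.
move=> sub; apply: subset_leq_card; apply/subsetP => y; rewrite !inE; exact: sub.
Qed.

Lemma inner_ok n psi psi0 f : forall cs, valid n cs -> (pot n cs < f)%N ->
  exists cs', [/\ valid n cs',
     inner pi K Psamp prob spMIP spLP Lb rsmp benders f n psi psi0 cs =
       Some ((rsmp n psi psi0 cs').1, (rsmp n psi psi0 cs').2, cs')
   & Q n (rsmp n psi psi0 cs').2 <= (rsmp n psi psi0 cs').1].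
Proof.
elim: f => [//|f IH] cs Hv Hp /=.
have [Hf Hopt] := Hrsmp n psi psi0 cs.
case E: (rsmp n psi psi0 cs) Hf Hopt => [t z] /= /andP [Hlb Hall] Hopt.
case: ifP => Hlt.
  apply: IH.
    move=> y /=; rewrite Hv andbT; apply: le_trans (Hbenders_valid _ _ _) _.
    exact: QLP_le_Q.
  rewrite ltnS in Hp; apply: leq_trans Hp; rewrite /pot.
  have H1 := card_drop (P := fun y => all (fun c => cutval c y < QLP n y) cs)
     (P' := fun y => all (fun c => cutval c y < QLP n y) (benders n z :: cs)) (z := z).
  have H2 := card_mono (P := fun y => all (fun c => cutval c y < Q n y) cs)
     (P' := fun y => all (fun c => cutval c y < Q n y) (benders n z :: cs)).
  suff: leq (#|[set y | all (fun c => cutval c y < QLP n y) (benders n z :: cs)]|).+1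
         #|[set y | all (fun c => cutval c y < QLP n y) cs]|.
    have : leq #|[set y | all (fun c => cutval c y < Q n y) (benders n z :: cs)]|
         #|[set y | all (fun c => cutval c y < Q n y) cs]|.
      by apply: H2 => y /= /andP [].
    lia.
  apply: H1.
  - move: Hall; apply: sub_all => c /= Hc; exact: le_lt_trans Hc Hlt.
  - rewrite /=; have -> := Hbenders_tight n z; by rewrite ltxx.
  - by move=> y /= /andP [].
case: ifP => HQ.
  by exists cs; rewrite E; split.
apply: IH.
  move=> y /=; rewrite Hv andbT; exact: LS_valid.
rewrite ltnS in Hp; apply: leq_trans Hp; rewrite /pot.
have H1 := card_drop (P := fun y => all (fun c => cutval c y < Q n y) cs)
   (P' := fun y => all (fun c => cutval c y < Q n y) (LS n z :: cs)) (z := z).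
have H2 := card_mono (P := fun y => all (fun c => cutval c y < QLP n y) cs)
   (P' := fun y => all (fun c => cutval c y < QLP n y) (LS n z :: cs)).
suff: leq (#|[set y | all (fun c => cutval c y < Q n y) (LS n z :: cs)]|).+1
       #|[set y | all (fun c => cutval c y < Q n y) cs]|.
  have : leq #|[set y | all (fun c => cutval c y < QLP n y) (LS n z :: cs)]|
       #|[set y | all (fun c => cutval c y < QLP n y) cs]|.
    by apply: H2 => y /= /andP [].
  lia.
have Htq : t < Q n z by rewrite ltNge HQ.
apply: H1.
- move: Hall; apply: sub_all => c /= Hc; exact: le_lt_trans Hc Htq.
- rewrite /=; have -> := LS_tight n z; by rewrite ltxx.
- by move=> y /= /andP [].
Qed.


Lemma weak_dual (s : pd_sol R Node d r) x lam :
  dual_feasible parent pi K Psamp prob spMIP cI G (fun _ => setT) s ->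
  pmp_feasible parent G h (fun _ => setT) x lam ->
  dual_obj h s <= pmp_obj pi K Psamp prob spMIP cI x lam.
Proof.
move=> [Hpsi [Hsig [Heta [Hub [Hx Hz]]]]] [F1 [F2 [F3 [F4 [F5 [F6 _]]]]]].
set X := fun n j => \sum_(m in path_set parent n) x m j.
set Y := fun n j => \sum_(z : bvec d) bR R (z j) * lam n z.
have EA : pmp_obj pi K Psamp prob spMIP cI x lam =
   \sum_m \sum_j (pi m * cI m j) * x m j + \sum_n \sum_(z : bvec d) Q n z * lam n z.
  rewrite /pmp_obj /TIC -big_split; apply: eq_bigr => n _; rewrite mulrDr; congr (_ + _).
    by rewrite mulr_sumr; apply: eq_bigr => j _; rewrite mulrA.
  rewrite mulr_sumr; apply: eq_bigr => z _; rewrite /Qrec -mulrA mulr_suml.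
  by congr (_ * _); apply: eq_bigr => k _.
rewrite EA.
set A := fun m j => \sum_(n | m \in path_set parent n) (ssig s n j - spsi s n j)
           + \sum_i seta s m i * G m i j + subx s m j.
have LB1 : \sum_m \sum_j A m j * x m j <= \sum_m \sum_j (pi m * cI m j) * x m j.
  apply: ler_sum => m _; apply: ler_sum => j _; apply: ler_wpM2r.
    by case/andP: (F5 m j).
  exact: Hx.
have LB2 : \sum_n \sum_(z : bvec d) (\sum_j spsi s n j * bR R (z j) + spsi0 s n) * lam n z
    <= \sum_n \sum_(z : bvec d) Q n z * lam n z.
  apply: ler_sum => n _; apply: ler_sum => z _; apply: ler_wpM2r.
    by case/andP: (F6 n z).
  by apply: Hz; rewrite inE.
apply: le_trans (lerD LB1 LB2).
have E1 : \sum_m \sum_j A m j * x m j =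
   \sum_n \sum_j (ssig s n j - spsi s n j) * X n j
 + \sum_n \sum_i seta s n i * (\sum_j G n i j * x n j)
 + \sum_n \sum_j subx s n j * x n j.
  have -> : \sum_m \sum_j A m j * x m j =
     \sum_m (\sum_j (\sum_(n | m \in path_set parent n) (ssig s n j - spsi s n j)) * x m j
        + \sum_i seta s m i * (\sum_j G m i j * x m j) + \sum_j subx s m j * x m j).
    apply: eq_bigr => m _.
    rewrite [X in _ = _ + X + _](_ : _ = \sum_j (\sum_i seta s m i * G m i j) * x m j).
      rewrite -!big_split /=; apply: eq_bigr => j _; rewrite /A; ring.
    under eq_bigr do rewrite mulr_sumr. rewrite exchange_big /=; apply: eq_bigr => j _; rewrite mulr_suml.
    by apply: eq_bigr => i _; rewrite mulrA.
  rewrite !big_split /=; congr (_ + _ + _).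
  rewrite exchange_big /= [RHS]exchange_big /=; apply: eq_bigr => j _.
  under eq_bigr do rewrite mulr_suml.
  rewrite (exchange_big_dep xpredT) //=.
  apply: eq_bigr => n _; rewrite /X mulr_sumr.
  by apply: eq_bigl => m.
have E2 : \sum_n \sum_(z : bvec d) (\sum_j spsi s n j * bR R (z j) + spsi0 s n) * lam n z
   = \sum_n (\sum_j spsi s n j * Y n j + spsi0 s n).
  apply: eq_bigr => n _.
  under eq_bigr do rewrite mulrDl.
  rewrite big_split /= -mulr_sumr F3 mulr1; congr (_ + _).
  under eq_bigr do rewrite mulr_suml.
  rewrite exchange_big /=; apply: eq_bigr => j _; rewrite /Y mulr_sumr.
  by apply: eq_bigr => z _; rewrite mulrA.
rewrite E1 E2 /dual_obj -!big_split /=; apply: ler_sum => n _.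
have I1 : \sum_j ssig s n j <= \sum_j (ssig s n j - spsi s n j) * X n j + \sum_j spsi s n j * Y n j.
  rewrite -big_split /=; apply: ler_sum => j _.
  have := Hsig n j; have := Hpsi n j; have := F1 n j; have := F2 n j.
  rewrite /X /Y.
  set a := ssig s n j; set b := spsi s n j; set u := \sum_(m in _) _; set v := \sum_(z : bvec d) _.
  move=> h1 h2 h3 h4; nra.
have I2 : \sum_i seta s n i * h n i <= \sum_i seta s n i * (\sum_j G n i j * x n j).
  apply: ler_sum => i _; apply: ler_wnM2l; [exact: Heta | exact: F4].
have I3 : \sum_j subx s n j <= \sum_j subx s n j * x n j.
  apply: ler_sum => j _; have := Hub n j; have := F5 n j; case/andP => _ h1 h2.
  set a := subx s n j in h2 *; set u := x n j in h1 *; nra.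
lra.
Qed.


Variable S0 : Node -> {set bvec d}.
Hypothesis Hrpmp : forall S : Node -> {set bvec d}, (forall n, S0 n \subset S n) ->
     pd_optimal parent pi K Psamp prob spMIP cI G h S (rpmp S).

Definition ifuel := (2 * #|{: bvec d}|).+1.
Arguments ifuel : simpl never.
Definition meas (S : Node -> {set bvec d}) := (#|{: Node}| * #|{: bvec d}| - \sum_n #|S n|)%N.

Local Notation inn := (inner pi K Psamp prob spMIP spLP Lb rsmp benders).

Lemma inner_res n psi psi0 cs : valid n cs ->
  let o := inn ifuel n psi psi0 cs in
  [/\ some_res o, valid n (res_cuts o), Q n (res_z o) <= res_theta o &
      forall z', smp_obj psi psi0 (res_theta o) (res_z o) <= smp_obj psi psi0 (Q n z') z'].
Proof.
move=> Hv o.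
have [cs' [Hv' E HQ]] := inner_ok psi psi0 Hv (pot_bound n cs : (pot n cs < ifuel)%N).
rewrite /o E; split => // z' /=.
have [_ Hopt] := Hrsmp n psi psi0 cs'.
apply: Hopt; rewrite /rsmp_feasible HLb /=; exact: Hv'.
Qed.

Local Notation out := (outer pi K Psamp prob spMIP spLP Lb rpmp rsmp benders).

Lemma outer_unfold f fi S C : out f.+1 fi S C =
  let s := rpmp S in
  let res := fun n => inn fi n (spsi s n) (spsi0 s n) (C n) in
  if [forall n, some_res (res n)] then
    if [forall n, 0 <= smp_obj (spsi s n) (spsi0 s n) (res_theta (res n)) (res_z (res n))]
    then Some (sx s, slam s)
    else out f fi (fun n => res_z (res n) |: S n) (fun n => res_cuts (res n))
  else None.
Proof. by []. Qed.

Lemma outer_ok (f : nat) : forall (S : Node -> {set bvec d}) (C : Node -> seq (cut R d)), (forall n, S0 n \subset S n) -> (forall n, valid n (C n)) ->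
  (meas S < f)%N ->
  exists x lam, outer pi K Psamp prob spMIP spLP Lb rpmp rsmp benders f ifuel S C = Some (x, lam)
    /\ pmp_optimal parent pi K Psamp prob spMIP cI G h x lam.
Proof.
elim: f => [//|f IH] S C HS HC Hm.
have [Hpf Hdf Heq] := Hrpmp HS.
rewrite outer_unfold; cbv zeta.
set s := rpmp S.
set res := fun n => inn ifuel n (spsi s n) (spsi0 s n) (C n).
have Hr : forall n, [/\ some_res (res n), valid n (res_cuts (res n)),
    Q n (res_z (res n)) <= res_theta (res n) &
    forall z', smp_obj (spsi s n) (spsi0 s n) (res_theta (res n)) (res_z (res n))
       <= smp_obj (spsi s n) (spsi0 s n) (Q n z') z'].
  move=> n; exact: inner_res.
have -> : [forall n, some_res (res n)].
  by apply/forallP => n; case: (Hr n).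
move: Hdf => [Hd1 [Hd2 [Hd3 [Hd4 [Hd5 Hd6]]]]].
case: ifP => Hall.
  exists (sx s), (slam s); split => //.
  have Hpf' : pmp_feasible parent G h (fun _ => setT) (sx s) (slam s).
    move: Hpf => [P1 [P2 [P3 [P4 [P5 [P6 _]]]]]].
    do 6 (split => //); by move=> n z; rewrite inE.
  split => // x' lam' Hf'.
  rewrite Heq; apply: weak_dual => //.
  do 5 (split => //).
  move=> n z _.
  have := forallP Hall n; case: (Hr n) => _ _ _ /(_ z) H1 H0.
  have := le_trans H0 H1; rewrite /smp_obj /s; lra.
move/negbT: Hall => /forallPn [n0 Hn0].
have Hnin : res_z (res n0) \notin S n0.
  apply/negP => Hin; move: Hn0; rewrite /smp_obj -ltNge.
  have := Hd6 n0 _ Hin; case: (Hr n0) => _ _ HQ _; lra.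
apply: IH.
- by move=> n; apply: subset_trans (HS n) _; apply: subsetUr.
- by move=> n; case: (Hr n).
have Hup : (\sum_n #|res_z (res n) |: S n| <= #|{: Node}| * #|{: bvec d}|)%N.
  rewrite -sum_nat_const; apply: leq_sum => n _; exact: max_card.
have Hlt : (\sum_n #|S n| < \sum_n #|res_z (res n) |: S n|)%N.
  rewrite (bigD1 n0) //= [X in (_ < X)%N](bigD1 n0) //= cardsU1 Hnin add1n ltnS.
  apply: leq_add => //; apply: leq_sum => n _; apply: subset_leq_card; exact: subsetUr.
move: Hm Hup Hlt; rewrite /meas /=. move: (#|{: Node}| * #|{: bvec d}|)%N (\sum_n #|S n|)%N (\sum_n #|res_z (res n) |: S n|)%N => a b c. lia.
Qed.

End Proof.
Unset Implicit Arguments.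

Theorem theorem2 (R : realFieldType) (Node Day Scen : finType) (d r : nat)
  (root : Node) (parent : Node -> Node)
  (Htree_root : parent root = root) (Htree : forall n, fconnect parent n root)
  (pi : Node -> R) (Hpi : forall n, 0 <= pi n)
  (K : Node -> {set Day}) (Psamp : Node -> Day -> {set Scen})
  (prob : Node -> Day -> Scen -> R) (Hprob : forall n k p, 0 <= prob n k p)
  (spMIP spLP : Node -> Day -> Scen -> bvec d -> R)
  (HLP : forall n k p z, spLP n k p z <= spMIP n k p z)
  (cI : Node -> 'I_d -> R) (G : Node -> 'I_r -> 'I_d -> R) (h : Node -> 'I_r -> R)
  (Lb : Node -> R) (HLb : forall n z, Lb n <= Qrec pi K Psamp prob spMIP n z)
  (rpmp : (Node -> {set bvec d}) -> pd_sol R Node d r)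
  (rsmp : Node -> ('I_d -> R) -> R -> seq (cut R d) -> R * bvec d)
  (benders : Node -> bvec d -> cut R d)
  (S0 : Node -> {set bvec d}) (C0 : Node -> seq (cut R d))
  (Hrpmp : forall S : Node -> {set bvec d}, (forall n, S0 n \subset S n) ->
     pd_optimal parent pi K Psamp prob spMIP cI G h S (rpmp S))
  (Hrsmp : forall n psi psi0 cs, rsmp_optimal Lb n psi psi0 cs (rsmp n psi psi0 cs))
  (Hbenders_valid : forall n zh z,
     cutval (benders n zh) z <= QLPrec pi K Psamp prob spLP n z)
  (Hbenders_tight : forall n zh,
     cutval (benders n zh) zh = QLPrec pi K Psamp prob spLP n zh)
  (HC0 : forall n z, all (fun c => cutval c z <= Qrec pi K Psamp prob spMIP n z) (C0 n)) :
  exists (nout nin : nat) (x : Node -> 'I_d -> R) (lam : Node -> bvec d -> R),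
    outer pi K Psamp prob spMIP spLP Lb rpmp rsmp benders nout nin S0 C0 = Some (x, lam)
    /\ pmp_optimal parent pi K Psamp prob spMIP cI G h x lam.
Proof.
have [x [lam [E O]]] := @outer_ok R Node Day Scen d r parent pi K Psamp prob spMIP spLP cI G h Lb
  rpmp rsmp benders Hpi Hprob HLP HLb Hrsmp Hbenders_valid Hbenders_tight S0 Hrpmp
  (meas S0).+1 S0 C0 (fun n => subxx _) HC0 (ltnSn _).
exists (meas S0).+1, (ifuel d), x, lam; split; [exact: E | exact: O].
Qed.
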